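(* Let $m\geq 2$ and $n\geq 3$ be integers. The Drazin index of the adjacency matrix of the oriented Dutch windmill graph $D^m_n$ is $n-1$.
   Context: For integers $m\geq 1$, $n\geq 3$, the oriented Dutch windmill graph $D^m_n$ is the directed graph with vertex set $V=\{1,2,\ldots,m(n-1)+1\}$ whose directed edges $(a,b)$ are exactly: $(1,(k-1)(n-1)+2)$ for $k\in\{1,\ldots,m\}$; $((k-1)(n-1)+i,(k-1)(n-1)+i+1)$ for $k\in\{1,\ldots,m\}$ and $i\in\{2,\ldots,n-1\}$; and $((k-1)(n-1)+n,1)$ for $k\in\{1,\ldots,m\}$. Its adjacency matrix $M=(a_{ij})$ has $a_{ij}=1$ if $(i,j)$ is an edge and $0$ otherwise. The Drazin index $\operatorname{ind}(A)$ of a square matrix $A$ is the least nonnegative integer $k$ such that there is a matrix $X$ with $A^{k+1}X=A^k$, $XAX=X$, $AX=XA$; equivalently, the multiplicity of $0$ as a root of the minimal polynomial of $A$. *)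

(* Defs.v *)
From HB Require Import structures.
From mathcomp Require Import all_boot all_order all_algebra.
Set Implicit Arguments. Unset Strict Implicit. Unset Printing Implicit Defensive.
Import Order.TTheory GRing.Theory Num.Theory.
Local Open Scope ring_scope.

(* Directed edge relation of the oriented Dutch windmill graph D^m_n,
   on vertices numbered 1 .. m(n-1)+1 exactly as in the paper. *)
Definition dw_edge (m n a b : nat) : bool :=
  has (fun k => (a == 1)%N && (b == (k - 1) * (n - 1) + 2)%N) (iota 1 m)
  || has (fun k => has (fun i => (a == (k - 1) * (n - 1) + i)%N
                              && (b == (k - 1) * (n - 1) + i + 1)%N)
                       (iota 2 (n - 2))) (iota 1 m)
  || has (fun k => (a == (k - 1) * (n - 1) + n)%N && (b == 1)%N) (iota 1 m).

(* Adjacency matrix; row/column index i : 'I_N stands for vertex i+1. *)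
Definition dw_adj (R : pzRingType) (m n : nat) : 'M[R]_((m * (n - 1))%N.+1) :=
  \matrix_(i, j) (dw_edge m n i.+1 j.+1)%:R.

Definition drazin_at (R : pzRingType) (N : nat) (A : 'M[R]_N) (k : nat) : Prop :=
  exists X : 'M[R]_N,
    [/\ A ^+ k.+1 *m X = A ^+ k, X *m A *m X = X & A *m X = X *m A].

Definition drazin_index_is (R : pzRingType) (N : nat) (A : 'M[R]_N) (k : nat) : Prop :=
  drazin_at A k /\ forall j, drazin_at A j -> (k <= j)%N.

(* Main.v *)
Require Import Defs.
From mathcomp Require Import all_boot all_order all_algebra zify.
Set Implicit Arguments. Unset Strict Implicit. Unset Printing Implicit Defensive.
Import Order.TTheory GRing.Theory Num.Theory.
Lemma blk_inj d c1 c2 q1 q2 : (0 < q1 <= d)%N -> (0 < q2 <= d)%N -> (c1*d+q1 = c2*d+q2)%N -> c1 = c2 /\ q1 = q2.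
Proof.
move=> /andP[h1 h2] /andP[h3 h4] E.
have : c1 = c2.
  case: (ltngtP c1 c2) => // h.
  - have : (c1.+1 * d <= c2 * d)%N by rewrite leq_mul2r h orbT.
    rewrite mulSn; lia.
  - have : (c2.+1 * d <= c1 * d)%N by rewrite leq_mul2r h orbT.
    rewrite mulSn; lia.
move=> h; subst; lia.
Qed.
Lemma edgeP m n a b : (3 <= n)%N -> dw_edge m n a b <->
  (exists2 c, (c < m)%N & a = 1%N /\ b = (c*(n-1)+2)%N) \/
  (exists c p, [/\ (c < m)%N, (2 <= p < n)%N, a = (c*(n-1)+p)%N & b = (c*(n-1)+p+1)%N]) \/
  (exists2 c, (c < m)%N & a = (c*(n-1)+n)%N /\ b = 1%N).
Proof.
move=> hn; rewrite /dw_edge; split.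
- case/orP => [/orP[]|].
  + case/hasP => k; rewrite mem_iota => /andP[k1 k2] /andP[/eqP -> /eqP ->].
    by left; exists (k-1) => //; lia.
  + case/hasP => k; rewrite mem_iota => /andP[k1 k2] /hasP[i]; rewrite mem_iota => /andP[i1 i2] /andP[/eqP -> /eqP ->].
    by right; left; exists (k-1), i; split => //; lia.
  + case/hasP => k; rewrite mem_iota => /andP[k1 k2] /andP[/eqP -> /eqP ->].
    by right; right; exists (k-1) => //; lia.
- case => [[c hc [-> ->]]|[[c [p [hc hp -> ->]]]|[c hc [-> ->]]]].
  + apply/orP; left; apply/orP; left; apply/hasP; exists c.+1; first by rewrite mem_iota; lia.
    by apply/andP; split; apply/eqP; lia.
  + apply/orP; left; apply/orP; right; apply/hasP; exists c.+1; first by rewrite mem_iota; lia.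
    apply/hasP; exists p; first by rewrite mem_iota; lia.
    by apply/andP; split; apply/eqP; lia.
  + apply/orP; right; apply/hasP; exists c.+1; first by rewrite mem_iota; lia.
    by apply/andP; split; apply/eqP; lia.
Qed.

Section Main.
Variables (R : numFieldType) (m n : nat).
Hypotheses (hm : (2 <= m)%N) (hn : (3 <= n)%N).
Local Open Scope ring_scope.
Local Notation N := (m * (n - 1)).+1.
Local Notation d := (n - 1)%N.
Local Notation A := (dw_adj R m n).

Definition e (t : nat) : 'cV[R]_N := \col_(i < N) ((i : nat) == t)%:R%R.
Definition S q := (\sum_(c < m) e (c * d + q)%N)%R.

Lemma mul_e (M : 'M[R]_N) (j : 'I_N) i : (M *m e j) i 0 = M i j.
Proof.
rewrite !mxE (bigD1 j) //= !mxE eqxx mulr1 big1 ?addr0 // => k hk.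
by rewrite !mxE (_ : (k : nat) == j = false) ?mulr0 //; exact: negbTE hk.
Qed.

Lemma blk_lt c q : (c < m)%N -> (q <= d)%N -> (c * d + q < N)%N.
Proof.
move=> hc hq; have : (c.+1 * d <= m * d)%N by rewrite leq_mul2r hc orbT.
rewrite mulSn; lia.
Qed.

Lemma Ae_entry t (ht : (t < N)%N) i : (A *m e t) i 0 = (dw_edge m n i.+1 t.+1)%:R%R.
Proof. by rewrite (mul_e _ (Ordinal ht)) mxE. Qed.

Lemma sum_ind (f : nat -> nat) (x : nat) (P : bool) :
  (forall c1 c2, (c1 < m)%N -> (c2 < m)%N -> f c1 = f c2 -> c1 = c2) ->
  (P <-> exists2 c, (c < m)%N & x = f c) ->
  (\sum_(c < m) ((x == f c)%:R : R) = (P%:R : R))%R.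
Proof.
move=> finj hP; case: P hP => hP.
- have [c hc ->] := (proj1 hP) isT.
  rewrite (bigD1 (Ordinal hc)) //= eqxx big1 ?addr0 // => k hk.
  case: eqP => // E; case/eqP: hk; apply: val_inj => /=.
  by apply: finj => //; rewrite -E.
- rewrite big1 // => k _; case: eqP => // E.
  by have := (proj2 hP) (ex_intro2 _ _ (val k) (ltn_ord k) E).
Qed.

Lemma S_entry q i : (S q) i 0 = (\sum_(c < m) (((i : nat) == c * d + q)%N%:R : R))%R.
Proof. by rewrite summxE; apply: eq_bigr => c _; rewrite mxE. Qed.

Lemma d_pos : (1 <= d)%N.
Proof. lia. Qed.

Lemma A_e0 : A *m e 0%N = S d.
Proof.
apply/matrixP => i j; rewrite ord1 Ae_entry // S_entry.
rewrite (@sum_ind (fun c => (c * d + d)%N) _ (dw_edge m n i.+1 1%N)) //.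
  move=> c1 c2 _ _ E; have [] // := @blk_inj d c1 c2 d d _ _ E; lia.
split.
- case/(edgeP _ _ _ hn) => [[c hc [_ E]]|[[c [p [hc hp _ E]]]|[c hc [E _]]]]; try nia.
  by exists c => //; nia.
- by case=> c hc ->; apply/(edgeP _ _ _ hn); right; right; exists c => //; lia.
Qed.

Lemma A_e1 c : (c < m)%N -> A *m e (c * d + 1)%N = e 0%N.
Proof.
move=> hc; apply/matrixP => i j; rewrite ord1 Ae_entry ?blk_lt ?d_pos // mxE.
have -> // : dw_edge m n i.+1 (c * d + 1).+1 = ((i : nat) == 0%N).
apply/idP/eqP.
- case/(edgeP _ _ _ hn) => [[c' hc' [E _]]|[[c' [p [hc' hp E1 E]]]|[c' hc' [_ E]]]]; try nia.
  have [] := @blk_inj d c c' 1 p _ _ (_ : (c * d + 1 = c' * d + p)%N); nia.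
- by move=> ->; apply/(edgeP _ _ _ hn); left; exists c => //; nia.
Qed.

Lemma A_eq c q : (c < m)%N -> (2 <= q <= d)%N -> A *m e (c * d + q)%N = e (c * d + q - 1)%N.
Proof.
move=> hc hq; apply/matrixP => i j; rewrite ord1 Ae_entry ?blk_lt //; last by case/andP: hq.
rewrite mxE.
have -> // : dw_edge m n i.+1 (c * d + q).+1 = ((i : nat) == c * d + q - 1)%N.
apply/idP/eqP.
- case/(edgeP _ _ _ hn) => [[c' hc' [E1 E]]|[[c' [p [hc' hp E1 E]]]|[c' hc' [_ E]]]].
  + have [] := @blk_inj d c c' q 1 _ _ (_ : (c * d + q = c' * d + 1)%N); nia.
  + have [] := @blk_inj d c c' q p _ _ (_ : (c * d + q = c' * d + p)%N); nia.
  + nia.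
- by move=> E; apply/(edgeP _ _ _ hn); right; left; exists c, q; split => //; nia.
Qed.

Lemma powS k (v : 'cV[R]_N) : A ^+ k.+1 *m v = A *m (A ^+ k *m v).
Proof. by rewrite exprS -mulmxE mulmxA. Qed.
Lemma powSr k (v : 'cV[R]_N) : A ^+ k.+1 *m v = A ^+ k *m (A *m v).
Proof. by rewrite exprSr -mulmxE mulmxA. Qed.
Lemma powD a b (v : 'cV[R]_N) : A ^+ (a + b) *m v = A ^+ a *m (A ^+ b *m v).
Proof. by rewrite exprD -mulmxE mulmxA. Qed.

Lemma mulmxMnr (M : 'M[R]_N) (v : 'cV[R]_N) k : M *m (v *+ k) = (M *m v) *+ k.
Proof. by elim: k => [|k IH]; rewrite ?mulr0n ?mulmx0 // !mulrS mulmxDr IH. Qed.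
Lemma mulmxMnl (M1 : 'M[R]_N) (v : 'cV[R]_N) k : (M1 *+ k) *m v = (M1 *m v) *+ k.
Proof. by elim: k => [|k IH]; rewrite ?mulr0n ?mul0mx // !mulrS mulmxDl IH. Qed.

Lemma powA_e c q k : (c < m)%N -> (1 <= q <= d)%N -> (k < q)%N ->
  A ^+ k *m e (c * d + q)%N = e (c * d + q - k)%N.
Proof.
move=> hc; elim: k q => [|k IH] q hq hk; first by rewrite expr0 mul1mx subn0.
rewrite powSr A_eq //; last by nia.
rewrite (_ : (c * d + q - 1 = c * d + (q - 1))%N); last by nia.
by rewrite IH; [congr e; nia | nia | nia].
Qed.

Lemma powA_eq c q : (c < m)%N -> (1 <= q <= d)%N -> A ^+ q *m e (c * d + q)%N = e 0%N.
Proof.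
move=> hc; case: q => // q hq; rewrite powS powA_e //.
by rewrite (_ : (c * d + q.+1 - q = c * d + 1)%N) ?A_e1 //; nia.
Qed.

Lemma A_S1 : A *m S 1%N = e 0%N *+ m.
Proof.
rewrite /S mulmx_sumr (eq_bigr (fun _ => e 0%N)) ?sumr_const ?card_ord // => c _.
by rewrite A_e1.
Qed.

Lemma A_Sq q : (2 <= q <= d)%N -> A *m S q = S (q - 1)%N.
Proof.
move=> hq; rewrite /S mulmx_sumr; apply: eq_bigr => c _; rewrite A_eq //; congr e; nia.
Qed.

Lemma powA_S k q : (1 <= q <= d)%N -> (k < q)%N -> A ^+ k *m S q = S (q - k)%N.
Proof.
elim: k q => [|k IH] q hq hk; first by rewrite expr0 mul1mx subn0.
rewrite powSr A_Sq; last by nia.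
by rewrite IH; [congr S; nia | nia | nia].
Qed.

Lemma powA_Sq q : (1 <= q <= d)%N -> A ^+ q *m S q = e 0%N *+ m.
Proof.
case: q => // q hq; rewrite powS powA_S //.
by rewrite (_ : (q.+1 - q = 1)%N) ?A_S1 //; nia.
Qed.

Lemma powA_e0 k : (1 <= k <= d)%N -> A ^+ k *m e 0%N = S (d + 1 - k)%N.
Proof.
case: k => // k hk; rewrite powSr A_e0 powA_S; [congr S | |]; nia.
Qed.

Lemma fix_e0 : A ^+ (d + 1) *m e 0%N = e 0%N *+ m.
Proof. by rewrite addn1 powSr A_e0 powA_Sq // d_pos leqnn. Qed.

Lemma fix_S q : (1 <= q <= d)%N -> A ^+ (d + 1) *m S q = S q *+ m.
Proof.
move=> hq; rewrite (_ : (d + 1 = (d + 1 - q) + q)%N); last by nia.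
rewrite powD powA_Sq // mulmxMnr powA_e0; last by nia.
by congr (S _ *+ _); nia.
Qed.

Lemma col_d t : (t < N)%N ->
  A ^+ d *m e t = e 0%N \/ exists2 q, (1 <= q <= d)%N & A ^+ d *m e t = S q.
Proof.
move=> ht; case: t ht => [|t] ht.
  by right; exists 1%N; [rewrite leqnn d_pos | rewrite powA_e0 ?leqnn ?d_pos //; congr S; nia].
have hdp := d_pos.
have Et : t = ((t %/ d) * d + t %% d)%N := divn_eq t d.
have hq : (t %% d < d)%N by rewrite ltn_mod; nia.
have hc : (t %/ d < m)%N by rewrite ltn_divLR; nia.
set c := (t %/ d)%N in Et hc; set r := (t %% d)%N in Et hq.
rewrite (_ : t.+1 = c * d + r.+1)%N; last by nia.
have -> : A ^+ d *m e (c * d + r.+1)%N = A ^+ (d - r.+1) *m (A ^+ r.+1 *m e (c * d + r.+1)%N).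
  by rewrite -powD subnK.
have h1 : (1 <= r.+1 <= d)%N by nia.
rewrite powA_eq //.
case E: (d - r.+1)%N => [|k]; first by left; rewrite expr0 mul1mx.
right; exists (d + 1 - k.+1)%N; first by nia.
by rewrite powA_e0 //; nia.
Qed.

Lemma key : A ^+ (d + 1) *m A ^+ d = A ^+ d *+ m.
Proof.
apply/matrixP => i j; rewrite -mul_e -mulmxA -mul_e mulmxMnl.
case: (col_d (ltn_ord j)) => [->|[q hq ->]]; rewrite ?fix_e0 ?fix_S //.
Qed.

Lemma lower j : drazin_at A j -> (d <= j)%N.
Proof.
case=> X [h1 _ hc]; rewrite leqNgt; apply/negP => hj.
have comm k : A ^+ k *m X = X *m A ^+ k.
  elim: k => [|k IH]; first by rewrite expr0 mul1mx mulmx1.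
  by rewrite exprS -mulmxE -mulmxA IH mulmxA hc -mulmxA.
have hj1 : (1 <= j.+1 <= d)%N by lia.
have hm0 : (0 < m)%N by lia.
have H0 : A ^+ j.+1 *m (e (0 * d + j.+1)%N - e (1 * d + j.+1)%N) = 0.
  by rewrite mulmxBr !powA_eq ?subrr.
have H1 : A ^+ j *m (e (0 * d + j.+1)%N - e (1 * d + j.+1)%N) = e 1%N - e (d + 1)%N.
  rewrite mulmxBr !powA_e //.
  rewrite (_ : (0 * d + j.+1 - j = 1)%N); last by rewrite mul0n; lia.
  by rewrite (_ : (1 * d + j.+1 - j = d + 1)%N) //; rewrite mul1n; lia.
have : A ^+ j *m (e (0 * d + j.+1)%N - e (1 * d + j.+1)%N) = 0.
  by rewrite -h1 comm -mulmxA H0 mulmx0.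
have h1N : (1 < N)%N by rewrite ltnS muln_gt0; apply/andP; split; lia.
rewrite H1 => /matrixP/(_ (Ordinal h1N) 0); rewrite !mxE /=.
rewrite (_ : (1 == d + 1)%N = false) ?subr0; last by apply/eqP; lia.
by move/eqP; rewrite oner_eq0.
Qed.

Lemma upper : drazin_at A d.
Proof.
have hm0 : (m%:R : R) != 0 by rewrite pnatr_eq0; lia.
have hAd : A ^+ d *m A = A ^+ (d + 1) by rewrite addn1 exprSr mulmxE.
have hdA : A *m A ^+ d = A ^+ (d + 1) by rewrite addn1 exprS mulmxE.
have keyS : A ^+ d.+1 *m A ^+ d = A ^+ d *+ m by have := key; rewrite addn1.
exists ((m%:R)^-1 *: A ^+ d); split.
- rewrite -scalemxAr keyS -scaler_nat scalerA mulVf // scale1r.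
  done.
- rewrite -scalemxAl -scalemxAl -scalemxAr scalerA hAd key -scaler_nat scalerA.
  by rewrite mulrAC -mulrA mulfV // mulr1.
- by rewrite -scalemxAr -scalemxAl hAd hdA.
Qed.
End Main.

Theorem theorem3p2 (R : numFieldType) (m n : nat) :
  (2 <= m)%N -> (3 <= n)%N -> drazin_index_is (dw_adj R m n) (n - 1).
Proof.
move=> hm hn; split; first exact: upper.
by move=> j; apply: lower.
Qed.
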